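(* Let $G=(V,E)$ be a biconnected geodetic graph containing a clique $C\subseteq V$. Then either $G$ is complete, or every vertex $u\in C$ has a neighbour $x_u\notin C$ such that $\{x_u\mid u\in C\}$ is an independent set of size $|C|$.
   Context: All graphs are finite, simple and undirected. A graph is geodetic if between any two vertices there is at most one shortest path. $G$ is biconnected if it is connected and for every $v\in V$ the subgraph induced by $V\setminus\{v\}$ is connected. *)

(* Defs.v *)
(* A finite simple graph is a symmetric irreflexive
   relation e : rel T on a finType T (vertex set V = T). *)
From mathcomp Require Import all_boot.
Set Implicit Arguments. Unset Strict Implicit. Unset Printing Implicit Defensive.

Section Graphs.
Variable T : finType.
Variable e : rel T.

Definition simple_graph : Prop := symmetric e /\ irreflexive e.

(* A walk from x to y: the vertex sequence x :: p, consecutive vertices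
   adjacent, ending at y. Its length is size p. *)
Definition walk (x y : T) (p : seq T) : bool := path e x p && (last x p == y).

(* A shortest path from x to y: a walk of minimum length among all walks
   from x to y (such a walk is automatically a path). *)
Definition shortest_path (x y : T) (p : seq T) : Prop :=
  walk x y p /\ forall q, walk x y q -> size p <= size q.

Definition geodetic : Prop :=
  forall x y p q, shortest_path x y p -> shortest_path x y q -> p = q.

Definition connected : Prop := forall x y : T, connect e x y.

Definition del_vertex (v : T) : rel T := [rel a b | [&& e a b, a != v & b != v]].

Definition biconnected : Prop :=
  connected /\ forall v x y, x != v -> y != v -> connect (del_vertex v) x y.

Definition clique (C : {set T}) : Prop :=
  forall u w, u \in C -> w \in C -> u != w -> e u w.

Definition complete : Prop := forall u w : T, u != w -> e u w.

Definition independent (S : {set T}) : Prop :=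
  forall a b, a \in S -> b \in S -> ~~ e a b.
End Graphs.

(* Main.v *)
Require Import Defs.
From mathcomp Require Import all_boot zify.
Set Implicit Arguments. Unset Strict Implicit. Unset Printing Implicit Defensive.

Section Dist.
Variable T : finType.
Variable e : rel T.
Hypothesis sym : symmetric e.
Hypothesis irr : irreflexive e.
Hypothesis conn : connected e.
Hypothesis geo : geodetic e.

Lemma exP x y : exists n, [exists t : n.-tuple T, walk e x y t].
Proof.
have /connectP [p pp ->] := conn x y.
exists (size p); apply/existsP; exists (in_tuple p).
by rewrite /walk pp eqxx.
Qed.

Definition d x y := ex_minn (exP x y).

Lemma d_min x y p : walk e x y p -> d x y <= size p.
Proof.
move=> w; rewrite /d; case: ex_minnP => n _ H; apply: H.
by apply/existsP; exists (in_tuple p).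
Qed.

Lemma d_ex x y : exists p, walk e x y p /\ size p = d x y.
Proof.
rewrite /d; case: ex_minnP => n /existsP [t wt] _; exists t.
by rewrite size_tuple.
Qed.

Lemma d_sp x y p : walk e x y p -> size p = d x y -> shortest_path e x y p.
Proof. by move=> w s; split=> // q wq; rewrite s; apply: d_min. Qed.

Lemma d_eq0 x y : d x y = 0 -> x = y.
Proof.
move=> H; case: (d_ex x y) => p [w s]; move: s; rewrite H.
by case: p w => // /andP[_ /eqP].
Qed.

Lemma d_eq1 x y : d x y = 1 -> e x y.
Proof.
move=> H; case: (d_ex x y) => p [w s]; move: s; rewrite H.
case: p w => // z [|? ?] // /andP[] /= /andP[xz _] /eqP <- _ //.
Qed.

Lemma d_adj x y : e x y -> d x y = 1.
Proof.
move=> xy.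
have h : d x y <= 1 by apply: (@d_min x y [:: y]); rewrite /walk /= xy eqxx.
have h0 : d x y != 0.
  by apply/eqP => /d_eq0 E; move: xy; rewrite E irr.
lia.
Qed.

Lemma d_tri x b y : e x b -> d x y <= (d b y).+1.
Proof.
move=> xb; case: (d_ex b y) => p [w s].
rewrite -s; apply: (@d_min x y (b :: p)).
by move: w; rewrite /walk /= xb.
Qed.

Lemma d_tri_r x y y' : e y y' -> d x y' <= (d x y).+1.
Proof.
move=> yy; case: (d_ex x y) => p [/andP[pp /eqP l] s].
rewrite -s -(size_rcons p y'); apply: d_min.
by rewrite /walk rcons_path pp l yy last_rcons eqxx.
Qed.

Lemma L_first z a b w : e z a -> e z b -> d a w = d b w ->
  d z w = (d a w).+1 -> a = b.
Proof.
move=> za zb ab zw.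
case: (d_ex a w) => p [wp sp]; case: (d_ex b w) => q [wq sq].
have h1 : shortest_path e z w (a :: p).
  apply: d_sp; first by move: wp; rewrite /walk /= za.
  by rewrite /= sp zw.
have h2 : shortest_path e z w (b :: q).
  apply: d_sp; first by move: wq; rewrite /walk /= zb.
  by rewrite /= sq zw ab.
by case: (geo h1 h2).
Qed.

Lemma L_step x y n : d x y = n.+1 -> exists b, e x b /\ d b y = n.
Proof.
move=> H; case: (d_ex x y) => p [w s]; rewrite H in s.
case: p w s => // b p; rewrite /walk /= => /andP[/andP[xb pb] l] [s].
exists b; split => //.
have h1 : d b y <= size p by apply: d_min; rewrite /walk pb l.
have h2 := d_tri y xb.
lia.
Qed.

End Dist.

Lemma connect_cross (T : finType) (r : rel T) (P : pred T) x y :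
  connect r x y -> P x -> ~~ P y -> exists a b, [/\ r a b, P a & ~~ P b].
Proof.
move/connectP=> [p pp ->]; elim: p x pp => [|z p IH] x /=.
  by move=> _ ->.
move=> /andP[xz pz] Px Pl.
case: (boolP (P z)) => Pz; first exact: IH pz Pz Pl.
by exists x, z; split.
Qed.

Section Clq.
Variable T : finType.
Variable e : rel T.
Hypothesis sym : symmetric e.
Hypothesis irr : irreflexive e.
Hypothesis conn : connected e.
Hypothesis bic : forall v x y, x != v -> y != v -> connect (del_vertex e v) x y.
Hypothesis geo : geodetic e.
Variable C : {set T}.
Hypothesis cl : clique e C.
Hypothesis maxC : forall y, y \notin C -> ~ (forall c, c \in C -> e y c).

Notation d := (d conn).

Lemma neqC c y : c \in C -> y \notin C -> c != y.
Proof. by move=> cC yC; apply/eqP => E; move: yC; rewrite -E cC. Qed.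

Lemma U y a b : y \notin C -> a \in C -> b \in C -> e a y -> e b y -> a = b.
Proof.
move=> yC aC bC ay yb; apply/eqP; apply/negPn/negP => ab.
apply: (maxC yC) => c cC.
case: (eqVneq c a) => [->|ca]; first by rewrite sym.
case: (eqVneq c b) => [->|cb]; first by rewrite sym.
apply/negPn/negP => nyc.
have ecy : ~~ e c y by rewrite sym.
have cy := neqC cC yC.
have h : d c y <= 2.
  by apply: (@d_min _ _ conn c y [:: a; y]); rewrite /walk /= (cl cC aC ca) ay eqxx.
have h0 : d c y != 0 by apply/eqP => /d_eq0 E; rewrite E eqxx in cy.
have h1 : d c y != 1 by apply/eqP => /d_eq1 E; rewrite E in ecy.
have := @L_first _ _ conn geo c a b y (cl cC aC ca) (cl cC bC cb).
rewrite (d_adj irr conn ay) (d_adj irr conn yb).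
move=> /(_ erefl). have -> : d c y = 2 by lia.
by move=> /(_ erefl) E; rewrite E eqxx in ab.
Qed.

Section NoOut.
Variable u : T.
Hypothesis uC : u \in C.
Hypothesis NU : forall y, e u y -> y \in C.

Lemma dpos c w : c \in C -> w \notin C -> 0 < d c w.
Proof.
move=> cC wC; case E: (d c w) => //.
by move: (neqC cC wC); rewrite (d_eq0 E) eqxx.
Qed.

Lemma structure w : w \notin C -> exists c0, [/\ c0 \in C, c0 != u &
  forall c, c \in C -> d c w = if c == c0 then d c0 w else (d c0 w).+1].
Proof.
move=> wC.
case: (@arg_minnP _ u (mem C) (fun c => d c w) uC) => c0 c0C minc.
set k := d c0 w.
have pu := dpos uC wC.
have [u' [uu' du']] := @L_step _ _ conn u w (d u w).-1 (esym (ltn_predK pu)).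
have u'C := NU uu'.
have m' := minc _ u'C.
have uc0 : u != c0.
  apply/eqP => E; move: m'; rewrite /k -E; lia.
have du : d u w = k.+1.
  have := @d_tri _ _ conn u c0 w (cl uC c0C uc0); rewrite -/k; lia.
have uniq : forall c, c \in C -> d c w = k -> c = c0.
  move=> c cC dc.
  have uc : u != c by apply/eqP => E; rewrite -E du in dc; lia.
  apply: (@L_first _ _ conn geo u c c0 w (cl uC cC uc) (cl uC c0C uc0)); rewrite dc //.
exists c0; split => //; first by rewrite eq_sym.
move=> c cC; case: (eqVneq c c0) => [->|cc0] //.
have h1 := minc _ cC.
have h2 := @d_tri _ _ conn c c0 w (cl cC c0C cc0).
have h3 : d c w != k by apply/eqP => /(uniq _ cC) E; rewrite E eqxx in cc0.
rewrite -/k; lia.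
Qed.

Lemma noout w0 : w0 \notin C -> False.
Proof.
move=> w0C.
have [c [cC cu sc]] := structure w0C.
pose Q v := ((v \in C) && (v != c)) ||
            ((v \notin C) && ~~ [forall c' in C, d c v <= d c' v]).
have Qu : Q u by rewrite /Q uC eq_sym cu.
have Qw : ~~ Q w0.
  rewrite /Q /= negb_or (negbTE w0C) /= negbK; apply/forall_inP => c' c'C.
  rewrite (sc _ c'C); case: ifP => //.
have uc : u != c by rewrite eq_sym.
have wc : w0 != c by rewrite eq_sym; exact: neqC cC w0C.
have := @bic c u w0 uc wc.
move=> /connect_cross /(_ Qu Qw) [v1 [v2 [/= /and3P[e12 v1c v2c] Q1 Q2]]].
move: Q1 Q2; rewrite /Q; clear Qu Qw; clear Q => Q1 Q2.
have v2C : v2 \notin C.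
  by apply/negP => v2C; move: Q2; rewrite v2C v2c.
move: Q2; rewrite negb_or (negbTE v2C) /= negbK => /forall_inP minc.
have [c2 [c2C _ sc2]] := structure v2C.
have cc2 : c = c2.
  apply/eqP; apply/negPn/negP => cc2.
  have := minc _ c2C; by rewrite (sc2 _ cC) (negbTE cc2) /= ltnn.
subst c2.
case: (boolP (v1 \in C)) => v1C.
  have := sc2 _ v1C; rewrite (negbTE v1c) /= (d_adj irr conn e12) => E.
  have E0 : d c v2 = 0 by case: E.
  by move: cC; rewrite (d_eq0 E0) (negbTE v2C).
move: Q1; rewrite (negbTE v1C) /= => /forall_inPn [c' c'C ltc'].
have [c1 [c1C _ sc1]] := structure v1C.
have c1c : c1 != c.
  apply/eqP => E; subst c1; move: ltc'; rewrite (sc1 _ c'C); case: ifP => _; clear -sc1; lia.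
have dcv1 := sc1 _ cC; rewrite eq_sym (negbTE c1c) /= in dcv1.
have dc1v2 := sc2 _ c1C; rewrite (negbTE c1c) /= in dc1v2.
have e21 : e v2 v1 by rewrite sym.
have t1 := @d_tri_r _ _ conn c v2 v1 e21.
have t2 := @d_tri_r _ _ conn c1 v1 v2 e12.
have p1 := dpos c1C v1C.
have [b [c1b db]] := @L_step _ _ conn c1 v1 (d c1 v1).-1 (esym (ltn_predK p1)).
have t3 := @d_tri_r _ _ conn b v1 v2 e12.
have t4 := @d_tri _ _ conn c1 b v2 c1b.
have dbv2 : d b v2 = d c v2 by clear -t1 t2 t3 t4 dcv1 dc1v2 db p1; lia.
have := @L_first _ _ conn geo c1 c b v2 (cl c1C cC c1c) c1b (esym dbv2).
have -> : d c1 v2 = (d c v2).+1 by clear -t1 t2 t3 t4 dcv1 dc1v2 db p1; lia.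
move=> /(_ erefl) E; subst b; clear -t1 t2 t3 t4 dcv1 dc1v2 db p1; lia.
Qed.

End NoOut.
End Clq.

Lemma indep (T : finType) (e : rel T) (sym : symmetric e) (irr : irreflexive e)
  (conn : connected e) (geo : geodetic e) (C : {set T}) (cl : clique e C)
  (maxC : forall y, y \notin C -> ~ (forall c, c \in C -> e y c))
  u v a b : u \in C -> v \in C -> u != v -> e u a -> a \notin C ->
  e v b -> b \notin C -> e a b -> False.
Proof.
move=> uC vC uv ua aC vb bC ab.
have nub : ~~ e u b.
  apply/negP => ub; move: uv; rewrite (U sym irr conn geo cl maxC bC uC vC ub vb).
  by rewrite eqxx.
have ubn := neqC uC bC.
have h : d conn u b <= 2.
  by apply: (@d_min _ _ conn u b [:: a; b]); rewrite /walk /= ua ab eqxx.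
have h0 : d conn u b != 0 by apply/eqP => /d_eq0 E; rewrite E eqxx in ubn.
have h1 : d conn u b != 1 by apply/eqP => /d_eq1 E; rewrite E in nub.
have := @L_first _ _ conn geo u a v b ua (cl _ _ uC vC uv).
rewrite (d_adj irr conn ab) (d_adj irr conn vb).
move=> /(_ erefl); have -> : d conn u b = 2 by clear -h h0 h1; lia.
move=> /(_ erefl) E; by move: aC; rewrite E vC.
Qed.

Definition cliqueb (T : finType) (e : rel T) (D : {set T}) :=
  [forall u in D, forall w in D, (u != w) ==> e u w].

Lemma cliquebP (T : finType) (e : rel T) (D : {set T}) :
  cliqueb e D -> clique e D.
Proof.
move=> /forall_inP H u w uD wD uw.
by have /forall_inP /(_ w wD) /implyP := H u uD; apply.
Qed.

Theorem proposition2 (T : finType) (e : rel T) (C : {set T}) :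
  simple_graph e -> biconnected e -> geodetic e -> clique e C ->
  complete e \/
  exists x : T -> T,
    (forall u, u \in C -> e u (x u) /\ x u \notin C) /\
    independent e (x @: C) /\ #|x @: C| = #|C|.
Proof.
move=> [sym irr] [conn bic] geo cl.
case: (boolP [forall u, forall w, (u != w) ==> e u w]) => [Hc | ncomp].
  left => u w uw; by move/forallP: Hc => /(_ u) /forallP /(_ w) /implyP; apply.
right.
have clC : cliqueb e C.
  apply/forall_inP => u uC; apply/forall_inP => w wC; apply/implyP; exact: cl.
have P0 : cliqueb e C && (C \subset C) by rewrite clC subxx.
case: (@arg_maxnP _ C (fun D : {set T} => cliqueb e D && (C \subset D)) (fun D : {set T} => #|D|) P0) => D /andP[/cliquebP clD CD] maxD.
have maxC : forall y, y \notin D -> ~ (forall c, c \in D -> e y c).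
  move=> y yD H.
  have : cliqueb e (y |: D) && (C \subset y |: D).
    rewrite (subset_trans CD (subsetUr _ _)) andbT.
    apply/forall_inP => a; rewrite in_setU1 => /orP[/eqP ->|aD];
      apply/forall_inP => b; rewrite in_setU1 => /orP[/eqP ->|bD];
      apply/implyP => ne.
    - by rewrite eqxx in ne.
    - exact: H.
    - by rewrite sym; apply: H.
    - exact: clD.
  move=> /maxD; rewrite cardsU1 yD /=; lia.
have [w0 w0D] : exists w, w \notin D.
  move: ncomp; rewrite negb_forall => /existsP [u]; rewrite negb_forall => /existsP [w].
  rewrite negb_imply => /andP[uw nuw].
  case: (boolP (u \in D)) => uD; last by exists u.
  case: (boolP (w \in D)) => wD; last by exists w.
  by move: nuw; rewrite (clD _ _ uD wD uw).
have out : forall u, u \in D -> exists y, e u y && (y \notin D).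
  move=> u uD; case: (boolP [exists y, e u y && (y \notin D)]) => [/existsP //|].
  move=> /existsPn NU; exfalso.
  apply: (@noout T e sym irr conn bic geo D clD u uD _ w0 w0D).
  by move=> y uy; move: (NU y); rewrite uy /= negbK.
pose x u := if [pick y | e u y && (y \notin D)] is Some y then y else u.
have xP : forall u, u \in D -> e u (x u) /\ x u \notin D.
  move=> u uD; rewrite /x; case: pickP => [y /andP[] //|H].
  by have [y] := out u uD; rewrite H.
exists x; split; [|split].
- move=> u uC; have [h1 h2] := xP u (subsetP CD u uC); split => //.
  by apply: contra h2; apply: (subsetP CD).
- move=> a b /imsetP [u uC ->] /imsetP [v vC ->].
  have uD := subsetP CD u uC; have vD := subsetP CD v vC.
  have [ua aD] := xP u uD; have [vb bD] := xP v vD.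
  case: (eqVneq u v) => [->|uv]; first by rewrite irr.
  apply/negP => ab; exact: (indep sym irr conn geo clD maxC uD vD uv ua aD vb bD ab).
- apply: card_in_imset => u v uC vC E.
  have uD := subsetP CD u uC; have vD := subsetP CD v vC.
  have [ua aD] := xP u uD; have [vb bD] := xP v vD.
  rewrite -E in vb.
  exact: (U sym irr conn geo clD maxC aD uD vD ua vb).
Qed.
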